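(* For any $r\in\big(1,(\log n)/(2\log(3e/2))\big]$ and $\gamma>0$, \[ \sum_{i=1}^\infty\frac{n^\gamma\log i}{(i^r+n)^\gamma}\ge\frac{1}{3\cdot2^\gamma r}\,n^{1/r}\log n. \] *)

(* Defs.v *)
From HB Require Import structures.
From mathcomp Require Import all_boot all_order all_algebra.
From mathcomp Require Import all_classical all_reals all_analysis.
Set Implicit Arguments. Unset Strict Implicit. Unset Printing Implicit Defensive.

(* Main.v *)
Require Import Defs.
From HB Require Import structures.
From mathcomp Require Import all_boot all_order all_algebra.
From mathcomp Require Import all_classical all_reals all_analysis.
From mathcomp Require Import ring lra zify.
Import Order.TTheory GRing.Theory Num.Theory.
Local Open Scope ring_scope.

Lemma pair_sum (R : realType) (M : nat) :
  (M%:R * ln (M%:R : R)) <= 2 * \sum_(i < M) ln (i.+1%:R : R).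
Proof.
have -> : 2 * \sum_(i < M) ln (i.+1%:R : R) =
  \sum_(i < M) (ln (i.+1%:R : R) + ln ((M - i)%:R)).
  rewrite big_split /= mulr2n mulrDl mul1r; congr (_ + _).
  rewrite (reindex_inj rev_ord_inj) /=; apply: eq_bigr => i _.
  by congr (ln _%:R); rewrite subnS prednK // subn_gt0.
rewrite mulr_natl.
have -> : ln (M%:R : R) *+ M = \sum_(i < M) ln (M%:R : R) by rewrite sumr_const card_ord.
apply: ler_sum => i _.
case: i => i hi /=.
rewrite -lnM ?posrE ?ltr0n ?subn_gt0 // -natrM.
rewrite ler_ln ?posrE ?ltr0n ?muln_gt0 ?subn_gt0 //; last by case: (M) hi.
rewrite ler_nat; nia.
Qed.

Lemma nat_ineq (R : realType) (M : nat) : (9 <= M)%N ->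
  2 * ((M.+1)%:R * ln (M.+1%:R : R)) <= 3 * (M%:R * ln (M%:R : R)).
Proof.
move=> hM.
have h2 : 0 < ln (2 : R) by apply: ln_gt0; lra.
have hM0 : (0 : R) < M%:R by rewrite ltr0n; lia.
have hM9 : (9 : R) <= M%:R by rewrite ler_nat.
have e1 : ln (M.+1%:R : R) <= ln 2 + ln (M%:R : R).
  rewrite -lnM ?posrE; [|lra|lra].
  rewrite ler_ln ?posrE; [|rewrite ltr0n //|lra].
  rewrite -natr1; lra.
have e2 : 3 * ln (2 : R) <= ln (M%:R : R).
  have -> : 3 * ln (2 : R) = ln (2 ^+ 3) by rewrite lnXn // mulr_natl; lra.
  rewrite ler_ln ?posrE //; try lra.
have e3 : 0 <= ln (M.+1%:R : R) by apply: ln_ge0; rewrite ler1n.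
rewrite -natr1.
nra.
Qed.

Theorem lemma8p3 (R : realType) (n : nat) (r gamma : R)
  (hr1 : 1 < r)
  (hr2 : r <= ln (n%:R : R) / (2 * ln (3 * expR 1 / 2)))
  (hgamma : 0 < gamma) :
  (((3 * powR 2 gamma * r)^-1 * powR (n%:R : R) r^-1 * ln (n%:R : R))%:E
    <= \sum_(1 <= i <oo)
         ((powR (n%:R : R) gamma * ln (i%:R : R))
            / powR (powR (i%:R : R) r + n%:R) gamma)%:E)%E.
Proof.
have he : 2 <= expR (1 : R) by have := expR_ge1Dx (1 : R); lra.
have hc3 : 3 <= 3 * expR (1 : R) / 2 by lra.
have hc : ln (3 : R) <= ln (3 * expR 1 / 2).
  by rewrite ler_ln ?posrE //; lra.
have hl3 : 0 < ln (3 : R) by apply: ln_gt0; lra.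
set c := ln (3 * expR (1 : R) / 2) in hr2 hc.
have hn : 0 < n%:R :> R.
  rewrite ltr0n lt0n; apply/negP => /eqP h0; move: hr2.
  rewrite h0 ln0 // mul0r; lra.
have hlnn : 2 * c * r <= ln (n%:R : R).
  by move: hr2; rewrite ler_pdivlMr; lra.
set N := powR (n%:R : R) r^-1.
have hN0 : 0 < N by apply: powR_gt0.
have hlnN : ln N * r = ln (n%:R : R).
  by rewrite /N ln_powR mulrAC mulVf ?mul1r //; lra.
have hNr : powR N r = n%:R.
  by rewrite /N -powRrM mulVf ?powRr1 //; lra.
have hlnN9 : ln (9 : R) <= ln N.
  have -> : 9 = (3 : R) ^+ 2 by rewrite expr2; lra.
  rewrite lnXn // mulr2n.
  have : 2 * c * r <= ln N * r by rewrite hlnN.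
  rewrite ler_pM2r; lra.
have hN9 : 9 <= N by move: hlnN9; rewrite ler_ln ?posrE //; lra.
set M := Num.truncn N.
have /andP[hM1 hM2] := truncn_itv (ltW hN0).
have hM9 : (9 <= M)%N by rewrite truncn_ge_nat //; lra.
set p := powR 2 gamma.
have hp : 0 < p by apply: powR_gt0.
have hterm : forall i : nat, (1 <= i <= M)%N ->
    ln (i%:R : R) / p <= (powR (n%:R : R) gamma * ln (i%:R : R))
            / powR (powR (i%:R : R) r + n%:R) gamma.
  move=> i /andP[hi1 hi2].
  have hi0 : 1 <= i%:R :> R by rewrite ler1n.
  have hiN : i%:R <= N by apply: le_trans hM1; rewrite ler_nat.
  have hl0 : 0 <= ln (i%:R : R) by apply: ln_ge0.
  have hir : powR (i%:R : R) r <= n%:R.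
    rewrite -hNr; apply: ge0_ler_powR => //; try lra; rewrite nnegrE; lra.
  have hD : powR (powR (i%:R : R) r + n%:R) gamma <= p * powR (n%:R : R) gamma.
    rewrite /p -powRM; try lra.
    apply: ge0_ler_powR; rewrite ?nnegrE; try lra.
    by have := powR_ge0 (i%:R : R) r; lra.
  have hD0 : 0 < powR (powR (i%:R : R) r + n%:R) gamma.
    by apply: powR_gt0; have := powR_ge0 (i%:R : R) r; lra.
  have hng : 0 < powR (n%:R : R) gamma by apply: powR_gt0.
  rewrite ler_pdivlMr // mulrAC ler_pdivrMr //.
  nra.
apply: (le_trans _ (nneseries_lim_ge M.+1 _)); last first.
  move=> k hk _; rewrite lee_fin; apply: mulr_ge0.
    by apply: mulr_ge0; [apply: powR_ge0 | apply: ln_ge0; rewrite ler1n].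
  by rewrite invr_ge0; apply: powR_ge0.
rewrite sumEFin lee_fin.
apply: (@le_trans _ _ (\sum_(1 <= i < M.+1) ln (i%:R : R) / p)); last first.
  by apply: ler_sum_nat => i /andP[h1 h2]; apply: hterm; rewrite h1 -ltnS.
rewrite big_add1 /= big_mkord -mulr_suml.
have hS := pair_sum R M.
have hI := @nat_ineq R M hM9.
have hlnN0 : 0 <= ln N by apply: ln_ge0; lra.
have hNM : N * ln N <= M.+1%:R * ln (M.+1%:R : R).
  apply: ler_pM => //; first lra; first lra.
  by rewrite ler_ln ?posrE //; lra.
set S := \sum_(i < M) ln (i.+1%:R : R) in hS *.
rewrite -hlnN.
have -> : (3 * p * r)^-1 * N * (ln N * r) = (N * ln N) / 3 / p.
  by field; rewrite ?hp; lra.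
rewrite ler_pM2r ?invr_gt0 //.
lra.
Qed.
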